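(* Let $(M,d)$ be a metric space, $\mathsf{P}\subseteq M$ a set of $n$ points, $1\le\ell\le k\le n$ integers with $m=\lfloor k/\ell\rfloor\ge2$. Let $Q=\{q_1,\dots,q_m\}$ be the output of Gonzalez's algorithm on $\mathsf{P}$ with $m$ centers, let $C\subseteq\mathsf{P}$ with $|C|=k$ and $C\supseteq\bigcup_{i=1}^m N_{\mathsf{P}}(q_i,\ell)$, let $r_{\mathrm{alg}}=\max_{p\in\mathsf{P}} d_C(p,\ell)$, and let $C^*\subseteq\mathsf{P}$, $|C^*|=k$, be an optimal fault-tolerant $k$-center solution with cost $r_{\mathrm{opt}}=\max_{p\in\mathsf{P}}d_{C^*}(p,\ell)$. If $r_{\mathrm{alg}}>3r_{\mathrm{opt}}$, then for all $1\le i\ne j\le m$ the balls $B(q_i,r_{\mathrm{opt}})$ and $B(q_j,r_{\mathrm{opt}})$ are disjoint, and each ball $B(q_i,r_{\mathrm{opt}})$ contains at least $\ell$ points of $C^*$.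
   Context: Gonzalez's algorithm with $m$ centers: $q_1\in\mathsf{P}$ is arbitrary, and for $i=2,\dots,m$, $q_i$ is a point of $\mathsf{P}$ maximizing $d(p,\{q_1,\dots,q_{i-1}\})$ over $p\in\mathsf{P}$. $B(q,x)$ is the closed ball of radius $x$ centered at $q$. For a finite $S\subseteq M$ and $1\le i\le|S|$, $d_S(p,i)$ is the radius of the smallest closed ball centered at $p$ containing at least $i$ points of $S$; nearest neighbors are ordered lexicographically by $(d(p,s),\text{index of }s)$ and $N_S(p,i)$ is the set of the first $i$ points of $S$ in this order. An optimal fault-tolerant $k$-center solution is a $C^*\subseteq\mathsf{P}$ with $|C^*|=k$ minimizing $\max_{p\in\mathsf{P}}d_{C^*}(p,\ell)$. *)

(* Defs.v *)
From HB Require Import structures.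
From mathcomp Require Import all_boot all_order all_algebra.
Set Implicit Arguments. Unset Strict Implicit. Unset Printing Implicit Defensive.
Import Order.TTheory GRing.Theory Num.Theory.
Local Open Scope ring_scope.

Section Defs.
Variables (R : realFieldType) (M : Type) (d : M -> M -> R).

Definition is_metric : Prop :=
  [/\ forall x y, 0 <= d x y,
      forall x y, d x y = 0 <-> x = y,
      forall x y, d x y = d y x &
      forall x y z, d x z <= d x y + d y z].

Definition dist_set (x : M) (S : seq M) : R :=
  match S with
  | [::] => 0
  | s :: S' => foldr (fun y acc => Num.min (d x y) acc) (d x s) S'
  end.

(* d_S(x,i): radius of the smallest closed ball centred at x containing at
   least i points of S (1 <= i <= |S|); this is the i-th smallest element
   (with multiplicity) of the multiset of distances {d(x,s) : s in S}. *)
Definition kdist (x : M) (S : seq M) (i : nat) : R :=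
  nth 0 (sort <=%R [seq d x s | s <- S]) i.-1.

Variables (n : nat) (pt : 'I_n -> M).
(* The point set P = {pt 0, ..., pt (n-1)}; the index of pt s is s. *)

Definition nn_lt (x : M) (s' s : 'I_n) : bool :=
  (d x (pt s') < d x (pt s)) || ((d x (pt s') == d x (pt s)) && (s' < s)%N).

(* N_P(x,i): the first i points of P in this order. *)
Definition NN (x : M) (i : nat) : {set 'I_n} :=
  [set s | (#|[set s' | nn_lt x s' s]| < i)%N].

Definition pts (C : {set 'I_n}) : seq M := [seq pt c | c <- enum C].

Definition ft_cost (C : {set 'I_n}) (l : nat) : R :=
  \big[Num.max/0]_(p : 'I_n) kdist (pt p) (pts C) l.

Definition is_opt_ft (k l : nat) (Cs : {set 'I_n}) : Prop :=
  #|Cs| = k /\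
  forall C : {set 'I_n}, #|C| = k -> ft_cost Cs l <= ft_cost C l.

Definition is_gonzalez (m : nat) (q : 'I_m -> 'I_n) : Prop :=
  forall i : 'I_m, (0 < i)%N ->
    let prev := [seq pt (q j) | j <- [seq j <- enum 'I_m | (nat_of_ord j < nat_of_ord i)%N]] in
    forall p : 'I_n, dist_set (pt p) prev <= dist_set (pt (q i)) prev.

End Defs.

(* Main.v *)
Require Import Defs.
From HB Require Import structures.
From mathcomp Require Import all_boot all_order all_algebra zify lra.
Import Order.TTheory GRing.Theory Num.Theory.
Local Open Scope ring_scope.
Set Implicit Arguments. Unset Strict Implicit.

Section Aux.
Variables (R : realFieldType) (M : Type) (d : M -> M -> R).

Lemma kdist_le (x : M) (S : seq M) (i : nat) (t : R) :
  (0 < i)%N -> (i <= count (fun s => (d x s <= t)%R) S)%N -> kdist d x S i <= t.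
Proof.
case: i => // i _ hc; rewrite /kdist /=.
set L := sort _ _.
have sL : sorted <=%R L by apply: sort_sorted; exact: le_total.
have cL : count (fun y => y <= t) L = count (fun s => d x s <= t) S.
  by rewrite /L count_sort count_map.
clearbody L.
rewrite leNgt; apply/negP => hv.
have : (count (fun y => (y <= t)%R) L <= i)%N.
  rewrite -(cat_take_drop i L) count_cat.
  have -> : count (fun y => y <= t) (drop i L) = 0%N.
    apply/eqP; rewrite -leqn0 leqNgt -has_count; apply/hasPn => y /(nthP 0) [j hj <-].
    rewrite nth_drop -ltNge.
    have {hj} hj : (j < size L - i)%N by rewrite -size_drop.
    apply: (lt_le_trans hv).
    apply: (sorted_leq_nth le_trans le_refl) => //; rewrite ?inE /=; lia.
  rewrite addn0; apply: (leq_trans (count_size _ _)); rewrite size_take_min; exact: geq_minl.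
rewrite cL => h2; have := leq_trans hc h2; by rewrite ltnn.
Qed.

Lemma kdist_cnt (x : M) (S : seq M) (i : nat) :
  (0 < i)%N -> (i <= size S)%N ->
  (i <= count (fun s => (d x s <= kdist d x S i)%R) S)%N.
Proof.
case: i => // i _ hs; rewrite /kdist /=.
set L := sort _ _.
have sL : sorted <=%R L by apply: sort_sorted; exact: le_total.
have szL : size L = size S by rewrite /L size_sort size_map.
set v := nth 0 L i.
have -> : count (fun s => d x s <= v) S = count (fun y => y <= v) L.
  by rewrite /L count_sort count_map.
clearbody L.
rewrite -(cat_take_drop i.+1 L) count_cat.
have : all (fun y => y <= v) (take i.+1 L).
  apply/allP => y /(nthP 0) [j hj <-].
  have {hj} hj : (j < minn i.+1 (size L))%N by rewrite -size_take_min.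
  have hji : (j < i.+1)%N by move: hj; rewrite leq_min => /andP[].
  have hjL : (j < size L)%N by move: hj; rewrite leq_min => /andP[].
  have hiL : (i < size L)%N by rewrite szL.
  rewrite nth_take //.
  by apply: (sorted_leq_nth le_trans le_refl) => //.
rewrite all_count => /eqP ->; rewrite size_take_min.
apply: leq_trans (leq_addr _ _); rewrite szL; lia.
Qed.

Lemma foldr_min_le (I : eqType) (f : I -> M) (x : M) (c : R) (s : seq I) :
  foldr (fun y acc => Num.min (d x y) acc) c (map f s) <= c /\
  (forall y, y \in s -> foldr (fun y acc => Num.min (d x y) acc) c (map f s) <= d x (f y)).
Proof.
elim: s => [|a s [IH1 IH2]] /=; first by split => // y.
split; first by rewrite ge_min IH1 orbT.
move=> y; rewrite inE => /orP[/eqP->|ys]; first by rewrite ge_min lexx.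
by rewrite ge_min IH2 ?orbT.
Qed.

Lemma foldr_min_eq (I : eqType) (f : I -> M) (x : M) (c : R) (s : seq I) :
  foldr (fun y acc => Num.min (d x y) acc) c (map f s) = c \/
  (exists2 y, y \in s & foldr (fun y acc => Num.min (d x y) acc) c (map f s) = d x (f y)).
Proof.
elim: s => [|a s IH] /=; first by left.
rewrite minEle; case: ifP => _; first by right; exists a => //; rewrite inE eqxx.
case: IH => [->|[y ys ->]]; first by left.
by right; exists y => //; rewrite inE ys orbT.
Qed.

Lemma dist_set_le (I : eqType) (f : I -> M) (x : M) (s : seq I) y :
  y \in s -> dist_set d x (map f s) <= d x (f y).
Proof.
case: s => [|a s] //=; rewrite inE => /orP[/eqP->|ys].
  by case: (foldr_min_le f x (d x (f a)) s).
by case: (foldr_min_le f x (d x (f a)) s) => _ ->.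
Qed.

Lemma dist_set_eq (I : eqType) (f : I -> M) (x : M) (s : seq I) :
  s != [::] -> exists2 y, y \in s & dist_set d x (map f s) = d x (f y).
Proof.
case: s => [|a s] //= _.
case: (foldr_min_eq f x (d x (f a)) s) => [->|[y ys ->]].
  by exists a; rewrite // inE eqxx.
by exists y; rewrite // inE ys orbT.
Qed.

Lemma dist_set_sub (I : eqType) (f : I -> M) (x : M) (s1 s2 : seq I) :
  s1 != [::] -> {subset s1 <= s2} ->
  dist_set d x (map f s2) <= dist_set d x (map f s1).
Proof.
move=> /(dist_set_eq f x) [y ys ->] sub.
exact: dist_set_le (sub _ ys).
Qed.

Variables (n : nat) (pt : 'I_n -> M).

Lemma card_count (A : {set 'I_n}) (P : pred 'I_n) :
  count P (enum A) = #|[set c in A | P c]|.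
Proof.
rewrite -sum1_count big_enum_cond -sum1_card; apply: eq_bigl => i; by rewrite inE.
Qed.

Lemma nn_lt_irr x s : nn_lt d pt x s s = false.
Proof. by rewrite /nn_lt ltxx ltnn andbF. Qed.

Lemma nn_lt_trans x a b c :
  nn_lt d pt x a b -> nn_lt d pt x b c -> nn_lt d pt x a c.
Proof.
rewrite /nn_lt => /orP[h1|/andP[/eqP e1 h1]] /orP[h2|/andP[/eqP e2 h2]].
- by rewrite (lt_trans h1 h2).
- by rewrite -e2 h1.
- by rewrite e1 h2.
- by rewrite e1 e2 eqxx (ltn_trans h1 h2) orbT.
Qed.

Lemma nn_lt_total x a b : a != b -> nn_lt d pt x a b || nn_lt d pt x b a.
Proof.
move=> ab; rewrite /nn_lt.
case: (ltgtP (d x (pt a)) (d x (pt b))) => //= e.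
by rewrite -neq_ltn.
Qed.

Lemma NN_card x l : (l <= n)%N -> (l <= #|NN d pt x l|)%N.
Proof.
move=> ln.
pose rk s := #|[set s' | nn_lt d pt x s' s]|.
have rklt s : (rk s < n)%N.
  rewrite -[X in (_ < X)%N](card_ord n) -cardsT; apply: proper_card; apply/properP; split.
    exact: subsetT.
  by exists s; rewrite ?inE ?nn_lt_irr.
pose f s := Ordinal (rklt s).
have finj : injective f.
  have key a b : nn_lt d pt x a b -> (rk a < rk b)%N.
    move=> hab; apply: proper_card; apply/properP; split.
      apply/subsetP => c; rewrite !inE => hc; exact: nn_lt_trans hc hab.
    by exists a; rewrite ?inE ?nn_lt_irr.
  move=> a b /(congr1 val) /= e; apply/eqP; apply/negPn/negP => ab.
  case/orP: (nn_lt_total x ab) => /key; by rewrite e ltnn.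
have -> : NN d pt x l = f @^-1: [set j : 'I_n | (j < l)%N].
  by apply/setP => s; rewrite !inE.
rewrite card_preimset //.
have -> : [set j : 'I_n | (j < l)%N] = [set widen_ord ln j | j in 'I_l].
  apply/setP => j; rewrite inE; apply/idP/imsetP => [jl|[j' _ ->]] //=.
  by exists (Ordinal jl) => //; apply: val_inj.
rewrite card_imset ?card_ord //.
by move=> a b /(congr1 val) /= e; apply: val_inj.
Qed.

Lemma NN_close (Cs : {set 'I_n}) x l (r : R) :
  (l <= #|[set c in Cs | (d x (pt c) <= r)%R]|)%N ->
  forall s, s \in NN d pt x l -> d x (pt s) <= r.
Proof.
move=> hc s; rewrite inE; apply: contraTT; rewrite -ltNge -leqNgt => hs.
apply: (leq_trans hc); apply: subset_leq_card; apply/subsetP => c.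
rewrite !inE => /andP[_ hcr]; rewrite /nn_lt (le_lt_trans hcr hs) //.
Qed.

End Aux.

Unset Implicit Arguments. Set Strict Implicit.
Theorem mainTheorem10 (R : realFieldType) (M : Type) (d : M -> M -> R)
  (n : nat) (pt : 'I_n -> M) (k l : nat) (q : 'I_(k %/ l) -> 'I_n)
  (C Cs : {set 'I_n}) :
  is_metric d -> injective pt ->
  (1 <= l)%N -> (l <= k)%N -> (k <= n)%N -> (2 <= k %/ l)%N ->
  is_gonzalez d pt q ->
  #|C| = k ->
  (forall i : 'I_(k %/ l), NN d pt (pt (q i)) l \subset C) ->
  is_opt_ft d pt k l Cs ->
  ft_cost d pt C l > 3%:R * ft_cost d pt Cs l ->
  (forall i j : 'I_(k %/ l), i != j -> forall x : M,
      ~ (d (pt (q i)) x <= ft_cost d pt Cs l /\ d (pt (q j)) x <= ft_cost d pt Cs l))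
  /\
  (forall i : 'I_(k %/ l),
      leq l #|[set c in Cs | d (pt (q i)) (pt c) <= ft_cost d pt Cs l]|).
Proof.
move=> [d0 dxx dsym dtri] _ l1 lk kn m2 gon cC NNC [cCs _] hgt.
set r := ft_cost d pt Cs l in hgt *.
set m := (k %/ l)%N in q gon NNC m2 *.
have r0 : 0 <= r by rewrite /r /ft_cost bigmax_idl le_max lexx.
have hrk p : kdist d (pt p) (pts pt Cs) l <= r.
  by rewrite /r /ft_cost; apply: (le_bigmax (0 : R) (fun p => kdist d (pt p) (pts pt Cs) l)).
have claim2 p : leq l #|[set c in Cs | d (pt p) (pt c) <= r]|.
  have := kdist_cnt d (pt p) l1 (_ : (l <= size (pts pt Cs))%N).
  rewrite /pts size_map -cardE cCs => /(_ lk) h.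
  rewrite -card_count; apply: (leq_trans h); rewrite count_map.
  by apply: sub_count => c /= hc; apply: le_trans hc (hrk p).
split; last by move=> i; apply: claim2.
have [p hp] : exists p, 3%:R * r < kdist d (pt p) (pts pt C) l.
  case: (boolP [exists p, 3%:R * r < kdist d (pt p) (pts pt C) l]) => [/existsP[p hp]|/existsPn h]; first by exists p.
  exfalso; move: hgt; rewrite ltNge => /negP; apply.
  rewrite /ft_cost; apply/bigmax_leP; split; first by rewrite mulr_ge0 // ler0n.
  by move=> i _; rewrite leNgt; exact: h i.
have m0 : (0 < m)%N by apply: leq_trans m2.
have mlt : (m.-1 < m)%N by rewrite prednK.
pose i0 : 'I_m := Ordinal m0.
pose im : 'I_m := Ordinal mlt.
pose prev (i : 'I_m) := [seq j <- enum 'I_m | (nat_of_ord j < nat_of_ord i)%N].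
have mem_prev (j i : 'I_m) : (j \in prev i) = (j < i)%N by rewrite mem_filter mem_enum andbT.
have prev_ne (i : 'I_m) : (0 < i)%N -> prev i != [::].
  move=> i00; apply/eqP => e; have : i0 \in prev i by rewrite mem_prev.
  by rewrite e.
have im0 : (0 < im)%N by rewrite /= -ltnS prednK.
set D := dist_set d (pt (q im)) [seq pt (q j) | j <- prev im].
have Dle : forall a b : 'I_m, (a < b)%N -> D <= d (pt (q b)) (pt (q a)).
  move=> a b ab; have b0 : (0 < b)%N by apply: leq_ltn_trans ab.
  apply: le_trans (dist_set_le d (fun j => pt (q j)) (pt (q b)) (_ : a \in prev b)); last by rewrite mem_prev.
  have := gon b b0; rewrite /= => /(_ (q im)) hg.
  apply: le_trans hg.
  apply: dist_set_sub; first exact: prev_ne.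
  move=> j; rewrite !mem_prev => jb; apply: leq_trans jb _.
  by rewrite /= -ltnS prednK.
have [j _ hj] := dist_set_eq d (fun j => pt (q j)) (pt p) (prev_ne im im0).
have hpj : d (pt p) (pt (q j)) <= D.
  rewrite -hj; have := gon im im0; rewrite /= => /(_ p); exact.
have ln : (l <= n)%N by apply: leq_trans kn.
have hk : kdist d (pt p) (pts pt C) l <= d (pt p) (pt (q j)) + r.
  apply: kdist_le => //; rewrite count_map card_count.
  apply: leq_trans (NN_card d pt (pt (q j)) ln) _; apply: subset_leq_card.
  apply/subsetP => c hc; rewrite inE (subsetP (NNC j)) //=.
  apply: le_trans (dtri _ (pt (q j)) _) _; rewrite lerD2l.
  exact: NN_close (claim2 (q j)) _ hc.
have D2 : 2%:R * r < D by move: hp hk hpj; lra.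
have key : forall a b : 'I_m, (a < b)%N -> forall x,
    d (pt (q a)) x <= r -> d (pt (q b)) x <= r -> False.
  move=> a b ab x ha hb; have := Dle a b ab.
  have := dtri (pt (q b)) x (pt (q a)); rewrite (dsym x (pt (q a))).
  by move: ha hb D2; lra.
move=> a b ab x [ha hb].
move: ab; rewrite -val_eqE neq_ltn => /orP[h|h].
  exact: key a b h x ha hb.
exact: key b a h x hb ha.
Qed.
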